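(* Let $\varphi_1,\dots,\varphi_k\in\mathrm{Cvx}(\mathbb{R}^n)$ satisfy $\varphi_i(x)\ge 0$ for all $1\le i\le k$ and $x\in\mathbb{R}^n$, and let $\lambda_1,\dots,\lambda_k>0$. Define \[ g_1(x)=\inf\Big\{\sum_{i=1}^k\lambda_i\varphi_i(y_i):\ \sum_{i=1}^k\lambda_iy_i=x\Big\},\qquad g_2(x)=\inf\Big\{\max_{1\le i\le k}\varphi_i(y_i):\ \sum_{i=1}^k\lambda_iy_i=x\Big\}, \] i.e. $g_1=\lambda_1\cdot\varphi_1\,\square\,\cdots\,\square\,\lambda_k\cdot\varphi_k$ and $g_2=\lambda_1\odot\varphi_1\oplus\cdots\oplus\lambda_k\odot\varphi_k$. Then for every $x\in\mathbb{R}^n$, \[ \Big(\sum_{i}\lambda_i\Big)^{-1}g_1(x)\le g_2(x)\le\big(\min_i\lambda_i\big)^{-1}g_1(x). \]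
   Context: $\mathrm{Cvx}(\mathbb{R}^n)$ is the class of convex lower semicontinuous functions $\varphi:\mathbb{R}^n\to(-\infty,\infty]$. The inf-convolution is $(\varphi\,\square\,\psi)(x)=\inf_y[\varphi(y)+\psi(x-y)]$ with homothety $(\lambda\cdot\varphi)(x)=\lambda\varphi(x/\lambda)$; the operation $\oplus$ is $(\varphi\oplus\psi)(x)=\inf_y\max\{\varphi(y),\psi(x-y)\}$ with homothety $(\lambda\odot\varphi)(x)=\varphi(x/\lambda)$. *)

(* Defs.v *)
From HB Require Import structures.
From mathcomp Require Import all_boot all_order all_algebra.
From mathcomp Require Import all_classical all_reals all_analysis.
Set Implicit Arguments. Unset Strict Implicit. Unset Printing Implicit Defensive.
Import Order.TTheory GRing.Theory Num.Theory.
Import numFieldNormedType.Exports.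
Local Open Scope classical_set_scope.
Local Open Scope ring_scope.

(* phi : R^n -> (-oo, +oo], convex and lower semicontinuous (closed sublevel sets). *)
Definition ecvx_fun (R : realType) (n : nat) (phi : 'rV[R]_n -> \bar R) : Prop :=
  (forall x, phi x != -oo%E) /\
  (forall (x y : 'rV[R]_n) (t : R), 0 < t -> t < 1 ->
     (phi (t *: x + (1 - t) *: y)%R <= t%:E * phi x + (1 - t)%:E * phi y)%E) /\
  (forall a : R, closed [set x | (phi x <= a%:E)%E]).

Definition g1 (R : realType) (n k : nat) (lambda : 'I_k -> R)
  (phi : 'I_k -> 'rV[R]_n -> \bar R) (x : 'rV[R]_n) : \bar R :=
  ereal_inf [set (\sum_(i < k) (lambda i)%:E * phi i (y i))%E
            | y in [set y : 'I_k -> 'rV[R]_n | \sum_(i < k) lambda i *: y i = x]].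

Definition g2 (R : realType) (n k : nat) (lambda : 'I_k -> R)
  (phi : 'I_k -> 'rV[R]_n -> \bar R) (x : 'rV[R]_n) : \bar R :=
  ereal_inf [set (\big[maxe/-oo%E]_(i < k) phi i (y i))%E
            | y in [set y : 'I_k -> 'rV[R]_n | \sum_(i < k) lambda i *: y i = x]].

(* Main.v *)
Require Import Defs.
From HB Require Import structures.
From mathcomp Require Import all_boot all_order all_algebra.
From mathcomp Require Import all_classical all_reals all_analysis.
Import Order.TTheory GRing.Theory Num.Theory.
Import numFieldNormedType.Exports.
Local Open Scope classical_set_scope.
Local Open Scope ring_scope.


Theorem proposition2p8 (R : realType) (n k : nat) (hk : (0 < k)%N)
  (phi : 'I_k -> 'rV[R]_n -> \bar R) (lambda : 'I_k -> R)
  (hcvx : forall i, ecvx_fun (phi i))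
  (hnn : forall i x, (0 <= phi i x)%E)
  (hlam : forall i, 0 < lambda i) :
  forall x : 'rV[R]_n,
    (((\sum_(i < k) lambda i)^-1)%:E * g1 lambda phi x <= g2 lambda phi x)%E /\
    (g2 lambda phi x
       <= ((\big[Num.min/lambda (Ordinal hk)]_(i < k) lambda i)^-1)%:E
          * g1 lambda phi x)%E.
Proof.
move=> x; split.
- set L := \sum_(i < k) lambda i.
  have L0 : 0 < L.
    rewrite /L (bigD1 (Ordinal hk)) //=.
    apply: ltr_pwDl; first exact: hlam.
    by apply: sumr_ge0 => i _; apply: ltW.
  apply/ereal_infP => _ [y Hy <-].
  set M := (\big[maxe/-oo%E]_(i < k) phi i (y i))%E.
  apply: (@le_trans _ _ ((L^-1)%:E * (\sum_(i < k) (lambda i)%:E * phi i (y i)))%E).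
    apply: lee_wpmul2l; first by rewrite lee_fin invr_ge0 ltW.
    by apply: ereal_inf_lbound; exists y.
  apply: (@le_trans _ _ ((L^-1)%:E * (L%:E * M))%E).
    apply: lee_wpmul2l; first by rewrite lee_fin invr_ge0 ltW.
    rewrite /L -sumEFin ge0_sume_distrl; last by move=> i _; rewrite lee_fin ltW.
    apply: lee_sum => i _; apply: lee_wpmul2l; first by rewrite lee_fin ltW.
    exact: (le_bigmax _ (fun i => phi i (y i))).
  by rewrite muleA -EFinM mulVf ?gt_eqF // mul1e.
- set m := \big[Num.min/lambda (Ordinal hk)]_(i < k) lambda i.
  have m0 : 0 < m.
    rewrite /m; apply: (big_ind (fun v => 0 < v)); [exact: hlam| |by move=> i _; exact: hlam].
    by move=> a b a0 b0; rewrite lt_min a0 b0.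
  have mle : forall i, m <= lambda i by move=> i; exact: bigmin_le.
  suff H : ((m%:E * g2 lambda phi x) <= g1 lambda phi x)%E.
    rewrite -[g2 _ _ _]mul1e -(mulVf (lt0r_neq0 m0)) EFinM -muleA.
    apply: lee_wpmul2l => //; by rewrite lee_fin invr_ge0 ltW.
  apply/ereal_infP => _ [y Hy <-].
  apply: (@le_trans _ _ (m%:E * \big[maxe/-oo%E]_(i < k) phi i (y i))%E).
    apply: lee_wpmul2l; first by rewrite lee_fin ltW.
    by apply: ereal_inf_lbound; exists y.
  apply: (@le_trans _ _ (m%:E * \sum_(i < k) phi i (y i))%E).
    apply: lee_wpmul2l; first by rewrite lee_fin ltW.
    apply: bigmax_le => [|j _]; first exact: leNye.
    rewrite (bigD1 j) //=; apply: lee_paddr; last exact: lexx.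
    by apply: sume_ge0 => i _; exact: hnn.
  rewrite ge0_sume_distrr; last by move=> i _; exact: hnn.
  apply: lee_sum => i _; apply: lee_wpmul2r; first exact: hnn.
  by rewrite lee_fin.
Qed.
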